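(* Let $\gamma\geq0$, $G=(V,E,\omega)\in\mathcal C_\gamma$, and let $V'$ be a proper subset of $V$. Assume $u,v\in\mathcal V$ satisfy $(Lu)_i\geq(Lv)_i$ for all $i\in V'$ and $u_i\geq v_i$ for all $i\in V\setminus V'$. Then $u_i\geq v_i$ for all $i\in V$.
   Context: $\mathcal{G}$ is the set of finite, simple, connected, undirected, edge-weighted graphs $G=(V,E,\omega)$ with $V=\{1,\dots,n\}$, $n\geq2$, weights $\omega_{ij}=\omega_{ji}>0$ on edges, $0$ otherwise. $d_i=\sum_j\omega_{ij}$. $\mathcal V$: functions $V\to\mathbb R$. Fixed $r\in[0,1]$: $(\Delta u)_i=d_i^{-r}\sum_j\omega_{ij}(u_i-u_j)$, $\mathcal M(u)=\sum_id_i^ru_i$, $\mathrm{vol}(V)=\sum_id_i^r$, $\mathcal A(u)=\frac{\mathcal M(u)}{\mathrm{vol}(V)}\chi_V$. For $u\in\mathcal V$ let $\varphi$ be the unique solution of $\Delta\varphi=u-\mathcal A(u)$, $\mathcal M(\varphi)=0$, and $Lu:=\Delta u+\gamma\varphi$. For a proper subset $S\subsetneq V$, the equilibrium measure $\nu^S$ is the unique $\nu\in\mathcal V$ with $(\Delta\nu)_i=1$ on $S$ and $\nu_i=0$ off $S$. $f^j:=\nu^{V\setminus\{j\}}-\mathcal A(\nu^{V\setminus\{j\}})$. $\mathcal C^0=\{G\in\mathcal G:\forall j\ \forall i\neq j:\ \omega_{ij}>0\text{ or }f^j_i\geq0\}$; for $\gamma>0$, $\mathcal C_\gamma=\{G\in\mathcal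 C^0:\forall j\ \forall i\neq j:\ \omega_{ij}=0\text{ or }d_i^{-r}\omega_{ij}+\gamma\frac{d_j^r}{\mathrm{vol}(V)}f^j_i>0\}$; $\mathcal C_0:=\mathcal G$. *)

(* Defs.v *)
From HB Require Import structures.
From mathcomp Require Import all_boot all_order all_algebra.
From mathcomp Require Import reals exp.
From Stdlib Require Import ClassicalEpsilon.
Set Implicit Arguments. Unset Strict Implicit. Unset Printing Implicit Defensive.
Import Order.TTheory GRing.Theory Num.Theory.
Local Open Scope ring_scope.

Section GraphDefs.
Variables (R : realType) (n : nat) (r : R) (w : 'I_n -> 'I_n -> R).

(* G = (V, E, w) in the class \mathcal G: V = {0..n-1}, n >= 2, symmetric
   nonnegative weights (edge iff w i j > 0), no loops, connected. *)
Definition is_graph : Prop :=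
  [/\ (2 <= n)%N,
      (forall i j, w i j = w j i),
      (forall i j, 0 <= w i j),
      (forall i, w i i = 0) &
      (forall i j, connect (fun a b => 0 < w a b) i j)].

Definition deg (i : 'I_n) : R := \sum_j w i j.

Definition Lap (u : 'I_n -> R) (i : 'I_n) : R :=
  powR (deg i) (- r) * \sum_j w i j * (u i - u j).

Definition Mass (u : 'I_n -> R) : R := \sum_i powR (deg i) r * u i.
Definition vol : R := \sum_i powR (deg i) r.
Definition Avg (u : 'I_n -> R) : 'I_n -> R := fun _ => Mass u / vol.

Definition phi (u : 'I_n -> R) : 'I_n -> R :=
  epsilon (inhabits (fun _ => 0))
    (fun p => (forall i, Lap p i = u i - Avg u i) /\ Mass p = 0).

Definition Lop (gamma : R) (u : 'I_n -> R) (i : 'I_n) : R :=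
  Lap u i + gamma * phi u i.

Definition eqmeas (S : {set 'I_n}) : 'I_n -> R :=
  epsilon (inhabits (fun _ => 0))
    (fun nu => (forall i, i \in S -> Lap nu i = 1) /\
               (forall i, i \notin S -> nu i = 0)).

Definition fj (j : 'I_n) : 'I_n -> R :=
  fun i => eqmeas [set~ j] i - Avg (eqmeas [set~ j]) i.

Definition inC0 : Prop :=
  forall j i : 'I_n, i != j -> 0 < w i j \/ 0 <= fj j i.

Definition inCgamma (gamma : R) : Prop :=
  gamma = 0 \/
  (0 < gamma /\ inC0 /\
   forall j i : 'I_n, i != j ->
     w i j = 0 \/
     0 < powR (deg i) (- r) * w i j + gamma * (powR (deg j) r / vol) * fj j i).

End GraphDefs.

(* Main.v *)
Require Import Defs.
From HB Require Import structures.
From mathcomp Require Import all_boot all_order all_algebra.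
From mathcomp Require Import reals exp.
From Stdlib Require Import ClassicalEpsilon.
From mathcomp Require Import ring lra.
Import Order.TTheory GRing.Theory Num.Theory.
Local Open Scope ring_scope.

Section S.
Variables (R : realType) (n : nat) (w : 'I_n -> 'I_n -> R).

Lemma strongP (c : 'I_n -> 'I_n -> R) (z : 'I_n -> R) (T : pred 'I_n) i0 :
  (forall i j, connect (fun a b => 0 < w a b) i j) ->
  (forall i k, 0 <= c i k) -> (forall i k, 0 < w i k -> 0 < c i k) ->
  (forall i, T i -> 0 <= \sum_k c i k * (z i - z k)) ->
  (forall k, z i0 <= z k) -> (forall i, z i = z i0 -> T i) ->
  forall j, z j = z i0.
Proof.
move=> Hc c0 cpos HT Hmin HM j.
have step : forall i k, z i = z i0 -> 0 < w i k -> z k = z i0.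
  move=> i k Hi Hik.
  have P0 : forall k0, 0 <= c i k0 * (z k0 - z i).
    by move=> k0; apply: mulr_ge0 => //; rewrite subr_ge0 Hi.
  have S0 : \sum_k0 c i k0 * (z k0 - z i) = 0.
    apply/eqP; rewrite eq_le; apply/andP; split.
      have := HT i (HM i Hi).
      rewrite -[X in 0 <= X]opprK oppr_ge0 -sumrN.
      by under eq_bigr => k0 _ do rewrite -mulrN opprB.
    by apply: sumr_ge0 => k0 _.
  have := psumr_eq0P (P := predT) (fun k0 _ => P0 k0) S0 (i := k) isT.
  move/eqP; rewrite mulf_eq0 (gt_eqF (cpos _ _ Hik)) /= subr_eq0 => /eqP ->.
  exact: Hi.
have /connectP [p Hp ->] := Hc i0 j.
suff H : forall q a, z a = z i0 -> path (fun a b => 0 < w a b) a q -> z (last a q) = z i0.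
  exact: H.
elim => [|x q IH] a //= Ha /andP [Hax Hq].
exact: IH (step a x Ha Hax) Hq.
Qed.

Lemma weakP (c : 'I_n -> 'I_n -> R) (z : 'I_n -> R) (T : {set 'I_n}) :
  (forall i j, connect (fun a b => 0 < w a b) i j) ->
  (forall i k, 0 <= c i k) -> (forall i k, 0 < w i k -> 0 < c i k) ->
  T != setT ->
  (forall i, i \in T -> 0 <= \sum_k c i k * (z i - z k)) ->
  (forall i, i \notin T -> 0 <= z i) ->
  forall i, 0 <= z i.
Proof.
move=> Hc c0 cpos HT HL Hout.
have [x Hx] : exists x, x \notin T.
  case: (pickP (fun x => x \notin T)) => [x Hx | H]; first by exists x.
  move: HT; rewrite eqEsubset subsetT /= => /negP; case.
  by apply/subsetP => y _; have := H y; rewrite /= => /negbFE.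
pose i0 := [arg min_(i < x) z i]%O.
have Hi0 : forall k, z i0 <= z k.
  rewrite /i0; case: arg_minP => // a _ Ha k; exact: Ha.
have [pos|neg] := lerP 0 (z i0).
  by move=> i; exact: le_trans pos (Hi0 i).
have H := @strongP c z (mem T) i0 Hc c0 cpos (fun i Hi => HL i Hi) Hi0.
have : z x = z i0.
  apply: H => i zi; apply/negPn/negP => /Hout; by rewrite zi leNgt neg.
by move: (Hout x Hx) => /[swap] ->; rewrite leNgt neg.
Qed.
End S.

Section G.
Variables (R : realType) (n : nat) (r : R) (w : 'I_n -> 'I_n -> R).
Hypothesis Hg : is_graph w.

Let n2 : (2 <= n)%N. Proof. by case: Hg. Qed.
Let wsym i j : w i j = w j i. Proof. by case: Hg. Qed.
Let w0 i j : 0 <= w i j. Proof. by case: Hg. Qed.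
Let wii i : w i i = 0. Proof. by case: Hg. Qed.
Let wc i j : connect (fun a b => 0 < w a b) i j. Proof. by case: Hg. Qed.

Lemma deg_pos i : 0 < deg w i.
Proof.
have h0 : (0 < n)%N by apply: leq_trans n2.
have h1 : (1 < n)%N by [].
pose j := if val i == 0%N then Ordinal h1 else Ordinal h0.
have ji : j != i.
  rewrite /j; case: (val i =P 0%N) => H; rewrite -(inj_eq val_inj) /=; first by rewrite H.
  by apply/eqP => E; apply: H; exact: esym E.
have /connectP [[|x p] Hp Hj] := wc i j; first by rewrite Hj eqxx in ji.
move: Hp => /= /andP [Hx _].
rewrite /deg (bigD1 x) //=; apply: (lt_le_trans Hx); apply: ler_wpDr => //.
by apply: sumr_ge0 => k _.
Qed.

Definition pp i := powR (deg w i) (- r).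
Definition qq i := powR (deg w i) r.

Lemma pp_gt0 i : 0 < pp i. Proof. exact: powR_gt0 (deg_pos i). Qed.
Lemma qq_gt0 i : 0 < qq i. Proof. exact: powR_gt0 (deg_pos i). Qed.
Lemma qqpp i : qq i * pp i = 1.
Proof. by rewrite /pp /qq powRN mulfV // gt_eqF // powR_gt0 // deg_pos. Qed.

Lemma vol_pos : 0 < vol r w.
Proof.
have h0 : (0 < n)%N by apply: leq_trans n2.
rewrite /vol (bigD1 (Ordinal h0)) //=; apply: (lt_le_trans (qq_gt0 (Ordinal h0))); apply: ler_wpDr => //.
by apply: sumr_ge0 => k _; apply/ltW/qq_gt0.
Qed.

Lemma Lap_sum z i : Lap r w z i = \sum_k (pp i * w i k) * (z i - z k).
Proof. by rewrite /Lap mulr_sumr; apply: eq_bigr => k _; rewrite mulrA. Qed.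

Lemma LapB y y' i : Lap r w (fun k => y k - y' k) i = Lap r w y i - Lap r w y' i.
Proof. rewrite !Lap_sum -sumrB; apply: eq_bigr => k _; rewrite /=; ring. Qed.

Lemma LapBc y c i : Lap r w (fun k => y k - c) i = Lap r w y i.
Proof. rewrite !Lap_sum; apply: eq_bigr => k _; rewrite /=; ring. Qed.

Lemma Lap_lin (g : 'I_n -> R) (F : 'I_n -> 'I_n -> R) i :
  Lap r w (fun i => \sum_k g k * F k i) i = \sum_k g k * Lap r w (F k) i.
Proof.
rewrite Lap_sum.
under eq_bigr => k _ do rewrite -sumrB mulr_sumr.
rewrite exchange_big /=; apply: eq_bigr => k _.
rewrite Lap_sum mulr_sumr; apply: eq_bigr => l _; ring.
Qed.

Lemma MassB y y' : Mass r w (fun k => y k - y' k) = Mass r w y - Mass r w y'.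
Proof. rewrite /Mass -sumrB; apply: eq_bigr => k _; ring. Qed.

Lemma Mass_lin (g : 'I_n -> R) (F : 'I_n -> 'I_n -> R) :
  Mass r w (fun i => \sum_k g k * F k i) = \sum_k g k * Mass r w (F k).
Proof.
rewrite /Mass.
under eq_bigr => k _ do rewrite mulr_sumr.
rewrite exchange_big /=; apply: eq_bigr => k _.
rewrite mulr_sumr; apply: eq_bigr => l _; ring.
Qed.

Lemma MassLap y : Mass r w (Lap r w y) = 0.
Proof.
have E : Mass r w (Lap r w y) = \sum_i \sum_k w i k * (y i - y k).
  rewrite /Mass; apply: eq_bigr => i _; rewrite /Lap mulrA -/(qq i) -/(pp i) qqpp mul1r //.
rewrite E.
set S := \sum_i _.
have : S = - S.
  rewrite {1}/S exchange_big /= /S -sumrN; apply: eq_bigr => i _.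
  rewrite -sumrN; apply: eq_bigr => k _; rewrite wsym; ring.
move=> H; lra.
Qed.


Lemma Lap_uniq y : (forall i, Lap r w y i = 0) -> Mass r w y = 0 -> forall i, y i = 0.
Proof.
move=> HL HM i.
pose i0 := [arg min_(k < i) y k]%O.
have Hi0 : forall k, y i0 <= y k.
  rewrite /i0; case: arg_minP => // a _ Ha k; exact: Ha.
have c0 : forall i k, 0 <= pp i * w i k by move=> a b; apply: mulr_ge0 => //; apply/ltW/pp_gt0.
have cpos : forall i k, 0 < w i k -> 0 < pp i * w i k by move=> a b H; apply: mulr_gt0 => //; apply: pp_gt0.
have HT : forall a, predT a -> 0 <= \sum_k (pp a * w a k) * (y a - y k).
  by move=> a _; rewrite -Lap_sum HL.
have Hc := @strongP R n w (fun i k => pp i * w i k) y predT i0 wc c0 cpos HT Hi0 (fun _ _ => isT).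
have : Mass r w y = y i0 * vol r w.
  rewrite /Mass /vol mulr_sumr; apply: eq_bigr => k _; rewrite Hc; ring.
rewrite HM => /esym /eqP; rewrite mulf_eq0 (gt_eqF vol_pos) orbF => /eqP.
by rewrite Hc.
Qed.

Lemma eqmeas_spec j :
  (forall i, i \in [set~ j] -> Lap r w (eqmeas r w [set~ j]) i = 1) /\
  (forall i, i \notin [set~ j] -> eqmeas r w [set~ j] i = 0).
Proof.
rewrite /eqmeas.
apply: (epsilon_spec (inhabits (fun=> 0)) (fun nu : 'I_n -> R => (forall i0, i0 \in [set~ j] -> Lap r w nu i0 = 1) /\ (forall i0, i0 \notin [set~ j] -> nu i0 = 0))).
pose B : 'M[R]_n := \matrix_(k, i)
   (if i == j then (k == j)%:R else pp i * (deg w i * (k == i)%:R - w i k)).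
have HB : forall (x : 'rV_n) i,
    (x *m B) 0 i = if i == j then x 0 j else Lap r w (fun k => x 0 k) i.
  move=> x i; rewrite !mxE; case: eqP => [->|ne].
    under eq_bigr => k _ do rewrite mxE eqxx.
    rewrite (bigD1 j) //= eqxx mulr1 big1 ?addr0 // => k /negbTE ->; by rewrite mulr0.
  under eq_bigr => k _ do rewrite mxE (introF eqP ne).
  have -> : \sum_k x 0 k * (pp i * (deg w i * (k == i)%:R - w i k))
      = pp i * (deg w i * \sum_k x 0 k * (k == i)%:R) - pp i * \sum_k w i k * x 0 k.
    rewrite !mulr_sumr -sumrB; apply: eq_bigr => k _; ring.
  rewrite (bigD1 i) //= eqxx mulr1 big1 ?addr0; last by move=> k /negbTE ->; rewrite mulr0.
  rewrite /Lap /deg -mulrBr mulr_suml -sumrB; congr (_ * _); apply: eq_bigr => k _; ring.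
have detB : \det B != 0.
  apply/negP => /det0P [v vn0 vB]; apply: (negP vn0); apply/eqP/rowP => k.
  have H1 : forall i, i \in [set~ j] -> Lap r w (fun k => v 0 k) i = 0.
    move=> i; rewrite !inE => /negbTE Hi.
    by have := HB v i; rewrite vB mxE Hi => <-.
  have H2 : forall i, i \notin [set~ j] -> v 0 i = 0.
    move=> i; rewrite !inE negbK => /eqP ->.
    by have := HB v j; rewrite vB mxE eqxx => <-.
  have c0 : forall i k, 0 <= pp i * w i k by move=> a b; apply: mulr_ge0 => //; apply/ltW/pp_gt0.
  have cpos : forall i k, 0 < w i k -> 0 < pp i * w i k by move=> a b H; apply: mulr_gt0 => //; apply: pp_gt0.
  have Tn : [set~ j] != setT.
    apply/negP => /eqP /setP /(_ j); by rewrite !inE eqxx.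
  have A1 : 0 <= v 0 k.
    apply: (@weakP R n w _ (fun k => v 0 k) _ wc c0 cpos Tn).
      by move=> i Hi; rewrite -Lap_sum H1.
    by move=> i Hi; rewrite H2.
  have A2 : 0 <= - v 0 k.
    apply: (@weakP R n w _ (fun k => - v 0 k) _ wc c0 cpos Tn).
      move=> i Hi; rewrite -Lap_sum.
      have -> : Lap r w (fun k => - v 0 k) i = - Lap r w (fun k => v 0 k) i.
        rewrite !Lap_sum -sumrN; apply: eq_bigr => l _; ring.
      by rewrite H1 // oppr0.
    by move=> i Hi; rewrite H2 // oppr0.
  rewrite mxE; lra.
pose b : 'rV[R]_n := \row_i (if i == j then 0 else 1).
exists (fun k => (b *m invmx B) 0 k).
have Hu : B \in unitmx by rewrite unitmxE unitfE.
have Hx := HB (b *m invmx B); rewrite mulmxKV // in Hx.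
split => i; rewrite !inE.
  move=> /negbTE Hi; have := Hx i; by rewrite Hi mxE Hi => <-.
rewrite negbK => /eqP ->; have := Hx j; by rewrite eqxx mxE eqxx => <-.
Qed.

Lemma Lap_nu k i : Lap r w (eqmeas r w [set~ k]) i = 1 - (i == k)%:R * (vol r w / qq k).
Proof.
have [H1 H2] := eqmeas_spec k.
case: (eqVneq i k) => [->|ne]; last first.
  by rewrite H1 ?inE // mul0r subr0.
rewrite mul1r.
set L := Lap r w _ k.
have E : qq k * L = qq k - vol r w.
  have := MassLap (eqmeas r w [set~ k]).
  rewrite /Mass (bigD1 k) //= -/(qq k) -/L.
  have -> : vol r w = qq k + \sum_(i | i != k) qq i by rewrite /vol (bigD1 k).
  under eq_bigr => l Hl do rewrite H1 ?inE // mulr1.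
  rewrite /qq; lra.
have qk := qq_gt0 k.
have -> : vol r w = qq k - qq k * L by lra.
field; by rewrite gt_eqF.
Qed.

Lemma Lap_fj k i : Lap r w (fj r w k) i = 1 - (i == k)%:R * (vol r w / qq k).
Proof. by rewrite /fj /Avg LapBc Lap_nu. Qed.

Lemma Mass_fj k : Mass r w (fj r w k) = 0.
Proof.
rewrite /fj /Avg /Mass.
under eq_bigr => i _ do rewrite mulrBr.
rewrite sumrB -mulr_suml -/(vol r w).
set M := \sum_i _ * eqmeas _ _ _ i.
have vp := vol_pos.
have -> : M = Mass r w (eqmeas r w [set~ k]) by [].
field; by rewrite gt_eqF.
Qed.

Definition psi (u : 'I_n -> R) (i : 'I_n) : R :=
  \sum_k (- (u k * (qq k / vol r w))) * fj r w k i.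

Lemma Lap_psi u i : Lap r w (psi u) i = u i - Avg r w u i.
Proof.
rewrite /psi Lap_lin.
under eq_bigr => k _ do rewrite Lap_fj.
have -> : \sum_k (- (u k * (qq k / vol r w))) * (1 - (i == k)%:R * (vol r w / qq k))
   = \sum_k (- (u k * (qq k / vol r w)))
     - \sum_k (i == k)%:R * ((- (u k * (qq k / vol r w))) * (vol r w / qq k)).
  rewrite -sumrB; apply: eq_bigr => k _; ring.
rewrite [X in _ - X](bigD1 i) //= eqxx mul1r [X in _ - (_ + X)]big1 ?addr0; last first.
  by move=> k Hk; rewrite eq_sym (negbTE Hk) mul0r.
have -> : \sum_k (- (u k * (qq k / vol r w))) = - (Mass r w u / vol r w).
  rewrite /Mass mulr_suml -sumrN; apply: eq_bigr => k _; rewrite /qq; ring.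
rewrite /Avg.
have qi := qq_gt0 i; have vp := vol_pos.
field; by rewrite !gt_eqF.
Qed.

Lemma Mass_psi u : Mass r w (psi u) = 0.
Proof. by rewrite /psi Mass_lin big1 // => k _; rewrite Mass_fj mulr0. Qed.

Lemma phi_eq u i : phi r w u i = psi u i.
Proof.
have Hs : (forall i, Lap r w (phi r w u) i = u i - Avg r w u i) /\ Mass r w (phi r w u) = 0.
  rewrite /phi.
  apply: (epsilon_spec (inhabits (fun=> 0)) (fun p => (forall i, Lap r w p i = u i - Avg r w u i) /\ Mass r w p = 0)).
  by exists (psi u); split; [exact: Lap_psi | exact: Mass_psi].
have HL : forall k, Lap r w (fun k => phi r w u k - psi u k) k = 0.
  by move=> k; rewrite LapB (proj1 Hs) Lap_psi subrr.
have HM : Mass r w (fun k => phi r w u k - psi u k) = 0.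
  by rewrite MassB Mass_psi (proj2 Hs) subrr.
have := @Lap_uniq _ HL HM i.
by move=> /eqP; rewrite subr_eq0 => /eqP.
Qed.

Lemma sum_fj i : \sum_k (qq k / vol r w) * fj r w k i = 0.
Proof.
have HL : forall k, Lap r w (psi (fun=> 1)) k = 0.
  move=> k; rewrite Lap_psi /Avg.
  have -> : Mass r w (fun=> 1) = vol r w by rewrite /Mass; apply: eq_bigr => l _; rewrite mulr1.
  by rewrite divff ?subrr // gt_eqF // vol_pos.
have := @Lap_uniq _ HL (Mass_psi _) i.
rewrite /psi => H0.
apply/eqP; rewrite -oppr_eq0 -sumrN; apply/eqP; rewrite -[RHS]H0; apply: eq_bigr => k _; ring.
Qed.

Lemma main_core gamma : inCgamma r w gamma ->
  forall (V' : {set 'I_n}), V' != setT ->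
  forall (u v : 'I_n -> R),
    (forall i, i \in V' -> Lop r w gamma v i <= Lop r w gamma u i) ->
    (forall i, i \notin V' -> v i <= u i) ->
    forall i, v i <= u i.
Proof.
move=> Hc V' HV u v H1 H2.
pose z := fun i => u i - v i.
suff : forall i, 0 <= z i by move=> H i; have := H i; rewrite subr_ge0.
have Hout : forall i, i \notin V' -> 0 <= z i by move=> i Hi; rewrite subr_ge0 H2.
case: Hc => [g0 | [gpos [HC0 HCg]]].
  have c0 : forall i k, 0 <= pp i * w i k by move=> a b; apply: mulr_ge0 => //; apply/ltW/pp_gt0.
  have cpos : forall i k, 0 < w i k -> 0 < pp i * w i k by move=> a b H; apply: mulr_gt0 => //; apply: pp_gt0.
  apply: (@weakP R n w _ z _ wc c0 cpos HV) => // i Hi.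
  have := H1 i Hi; rewrite /Lop g0 !mul0r !addr0 -subr_ge0 -LapB.
  by rewrite Lap_sum.
pose c := fun i k => if k == i then 0
  else pp i * w i k + gamma * (qq k / vol r w) * fj r w k i.
have vp := vol_pos.
have c0 : forall i k, 0 <= c i k.
  move=> i k; rewrite /c; case: eqP => [_|ne]; first exact: lexx.
  have ne' : i != k by apply/eqP => E; apply: ne; rewrite E.
  case: (HCg k i ne') => [wz|]; last by move/ltW.
  rewrite wz mulr0 add0r.
  case: (HC0 k i ne') => [|f0]; first by rewrite wz ltxx.
  apply: mulr_ge0 => //; apply: mulr_ge0; first exact: ltW.
  by apply: divr_ge0; [apply/ltW/qq_gt0 | apply/ltW].
have cpos : forall i k, 0 < w i k -> 0 < c i k.
  move=> i k Hw; rewrite /c; case: eqP => [E|ne].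
    by move: Hw; rewrite E wii ltxx.
  have ne' : i != k by apply/eqP => E; apply: ne; rewrite E.
  by case: (HCg k i ne') => [wz|//]; move: Hw; rewrite wz ltxx.
apply: (@weakP R n w c z _ wc c0 cpos HV) => // i Hi.
have E : Lop r w gamma u i - Lop r w gamma v i = \sum_k c i k * (z i - z k).
  have E1 : psi u i - psi v i = \sum_k (qq k / vol r w * fj r w k i) * (z i - z k).
    have : \sum_k (qq k / vol r w * fj r w k i) * (z i - z k)
        = z i * \sum_k (qq k / vol r w * fj r w k i) - \sum_k (qq k / vol r w * fj r w k i) * z k.
      by rewrite mulr_sumr -sumrB; apply: eq_bigr => k _; ring.
    rewrite sum_fj mulr0 sub0r => ->.
    rewrite /psi -sumrB -sumrN; apply: eq_bigr => k _; rewrite /z; ring.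
  rewrite /Lop !phi_eq.
  have -> : Lap r w u i + gamma * psi u i - (Lap r w v i + gamma * psi v i)
     = (Lap r w u i - Lap r w v i) + gamma * (psi u i - psi v i) by ring.
  rewrite -LapB E1 Lap_sum mulr_sumr -big_split /=; apply: eq_bigr => k _.
  rewrite /c; case: eqP => [->|_]; first by rewrite subrr !mulr0 addr0.
  rewrite /z; ring.
by rewrite -E subr_ge0 H1.
Qed.
End G.

Theorem lemma6p25 (R : realType) (n : nat) (r gamma : R)
    (w : 'I_n -> 'I_n -> R) :
  0 <= r -> r <= 1 ->
  is_graph w ->
  0 <= gamma ->
  inCgamma r w gamma ->
  forall (V' : {set 'I_n}), V' != setT ->
  forall (u v : 'I_n -> R),
    (forall i, i \in V' -> Lop r w gamma v i <= Lop r w gamma u i) ->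
    (forall i, i \notin V' -> v i <= u i) ->
    forall i, v i <= u i.
Proof.
move=> _ _ Hg _ Hc.
exact: (@main_core R n r w Hg gamma Hc).
Qed.
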